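(* Let $G$ be a strongly connected doubly stochasticable digraph of order $n\in\mathbb{Z}_{>0}$ with DS-character $\operatorname{ds}(G)$. Then for every integer $C\geq\operatorname{ds}(G)$ there exists a weight assignment $A_{\mathrm{wb}}\in\mathbb{Z}^{n\times n}_{\geq0}$ that makes $G$ a $C$-regular digraph.
   Context: A digraph $G=(V,E)$, $V=\{v_1,\dots,v_n\}$, $E\subseteq V\times V$ (self-loops allowed); strongly connected means a directed path exists between every ordered pair of distinct vertices. An adjacency matrix (weight assignment) for $G$ is $A\in\mathbb{R}^{n\times n}_{\geq0}$ with $a_{ij}>0$ iff $(v_i,v_j)\in E$; $G$ is doubly stochasticable if it admits one with all row and column sums $1$. $G$ with weights $A$ is $C$-regular if $G$ is strongly connected and all row sums and all column sums of $A$ equal $C$. A cycle is a directed path $v_{i_1},\dots,v_{i_k},v_{i_1}$ with distinct $v_{i_1},\dots,v_{i_k}$ (self-loops are cycles), viewed as a subdigraph; $\mathcal{C}(G)$ is the set of subdigraphs that are a single edgeless vertex, a cycle, or a union of pairwise vertex-disjoint cycles; a family generates $G$ if the union of vertex sets is $V$ and of edge sets is $E$. $\operatorname{ds}(G)$ is the minimum cardinality of a subset of $\mathcal{C}(G)$ generating $G$ all of whose elements contain every vertex of $G$. *)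

(* Defs.v *)
From HB Require Import structures.
From mathcomp Require Import all_boot all_order all_algebra.
From mathcomp Require Import Rstruct.
From Stdlib Require Rdefinitions.
Set Implicit Arguments. Unset Strict Implicit. Unset Printing Implicit Defensive.
Import Order.TTheory GRing.Theory Num.Theory.
Local Open Scope ring_scope.

(* A digraph of order n: vertex set 'I_n, edge set E (self-loops allowed). *)
Definition digraph (n : nat) := {set 'I_n * 'I_n}.

Definition strongly_connected n (E : digraph n) : Prop :=
  forall i j : 'I_n, i != j -> connect (fun x y => (x, y) \in E) i j.

Definition weight_assignment (R : numDomainType) n (E : digraph n)
    (A : 'M[R]_n) : Prop :=
  forall i j : 'I_n, 0 <= A i j /\ ((0 < A i j) <-> ((i, j) \in E)).

Definition row_sums_eq (R : numDomainType) n (A : 'M[R]_n) (c : R) : Prop :=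
  forall i : 'I_n, \sum_(j < n) A i j = c.
Definition col_sums_eq (R : numDomainType) n (A : 'M[R]_n) (c : R) : Prop :=
  forall j : 'I_n, \sum_(i < n) A i j = c.

Definition doubly_stochasticable n (E : digraph n) : Prop :=
  exists A : 'M[Rdefinitions.R]_n, weight_assignment E A /\ row_sums_eq A 1 /\ col_sums_eq A 1.

Definition C_regular (R : numDomainType) n (E : digraph n) (A : 'M[R]_n)
    (C : R) : Prop :=
  strongly_connected E /\ row_sums_eq A C /\ col_sums_eq A C.

Definition subdigraph n := ({set 'I_n} * {set 'I_n * 'I_n})%type.

(* Edge set of the cycle v_1,...,v_k,v_1 given by a duplicate-free
   nonempty sequence s = [:: v_1; ...; v_k] (next = cyclic successor). *)
Definition cycle_edges n (s : seq 'I_n) : {set 'I_n * 'I_n} :=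
  [set (x, next s x) | x in s].

Definition is_cycle_seq n (E : digraph n) (s : seq 'I_n) : Prop :=
  [/\ s != [::], uniq s & cycle_edges s \subset E].

(* Membership in C(G): a single edgeless vertex, or a union of (one or
   more) pairwise vertex-disjoint cycles of G. *)
Definition in_CG n (E : digraph n) (H : subdigraph n) : Prop :=
  (exists v : 'I_n, H = ([set v], set0))
  \/ (exists ss : seq (seq 'I_n),
        [/\ ss != [::], (forall s, s \in ss -> is_cycle_seq E s),
            uniq (flatten ss),
            H.1 = [set x in flatten ss]
          & H.2 = \bigcup_(s <- ss) cycle_edges s]).

Definition ds_family n (E : digraph n) (F : {set subdigraph n}) : Prop :=
  [/\ (forall H, H \in F -> in_CG E H),
      (forall H, H \in F -> H.1 = setT),
      \bigcup_(H in F) H.1 = setT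
    & \bigcup_(H in F) H.2 = E].

Definition is_ds n (E : digraph n) (d : nat) : Prop :=
  (exists F, ds_family E F /\ #|F| = d)
  /\ (forall F, ds_family E F -> (d <= #|F|)%N).

(* Main.v *)
Require Import Defs.
From HB Require Import structures.
From mathcomp Require Import all_boot all_order all_algebra.
From mathcomp Require Import Rstruct.
Import Order.TTheory GRing.Theory Num.Theory.
Local Open Scope ring_scope.

Lemma sum_indicator1 n (P : pred 'I_n) j0 :
  (forall j, P j = (j == j0)) -> (\sum_(j < n) (P j : nat) = 1)%N.
Proof.
move=> hP; rewrite (bigD1 j0) //= big1 ?addn0; first by rewrite hP eqxx.
by move=> j hj; rewrite hP (negbTE hj).
Qed.

Lemma in_bigcup_seq (T : finType) (I : eqType) (ss : seq I) (F : I -> {set T}) x :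
  (x \in \bigcup_(s <- ss) F s) = has (fun s => x \in F s) ss.
Proof.
elim: ss => [|s ss IH]; first by rewrite big_nil in_set0.
by rewrite big_cons in_setU IH.
Qed.

Lemma uniq_flatten_same (T : eqType) (ss : seq (seq T)) s s' x :
  uniq (flatten ss) -> s \in ss -> s' \in ss -> x \in s -> x \in s' -> s = s'.
Proof.
elim: ss => [//|s0 ss IH] /=; rewrite cat_uniq => /and3P[u0 hdis uss].
rewrite !inE => /orP[/eqP->|hs] /orP[/eqP->|hs'] xs xs' //.
- exfalso; move/negP: hdis; apply; apply/hasP; exists x => //.
  by apply/flattenP; exists s'.
- exfalso; move/negP: hdis; apply; apply/hasP; exists x => //.
  by apply/flattenP; exists s.
- exact: IH.
Qed.

Lemma row_cover n (ss : seq (seq 'I_n)) i :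
  (forall s, s \in ss -> uniq s) -> uniq (flatten ss) -> i \in flatten ss ->
  (\sum_(j < n) (((i, j) \in \bigcup_(s <- ss) cycle_edges s) : nat) = 1)%N.
Proof.
move=> hu hU /flattenP[s hs his].
apply: (@sum_indicator1 _ _ (next s i)) => j.
rewrite in_bigcup_seq; apply/hasP/eqP.
- case=> s' hs' /imsetP[x hx [hix ->]]; subst x.
  by rewrite (@uniq_flatten_same _ _ _ _ _ hU hs hs' his hx).
- move=> ->; exists s => //; apply/imsetP; by exists i.
Qed.

Lemma col_cover n (ss : seq (seq 'I_n)) j :
  (forall s, s \in ss -> uniq s) -> uniq (flatten ss) -> j \in flatten ss ->
  (\sum_(i < n) (((i, j) \in \bigcup_(s <- ss) cycle_edges s) : nat) = 1)%N.
Proof.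
move=> hu hU /flattenP[s hs hjs].
apply: (@sum_indicator1 _ _ (prev s j)) => i.
rewrite in_bigcup_seq; apply/hasP/eqP.
- case=> s' hs' /imsetP[x hx [hix hj]]; subst x.
  have hjs' : j \in s' by rewrite hj mem_next.
  rewrite (@uniq_flatten_same _ _ _ _ _ hU hs hs' hjs hjs') hj.
  by rewrite prev_next // hu.
- move=> ->; exists s => //; apply/imsetP; exists (prev s j).
    by rewrite mem_prev.
  by rewrite next_prev // hu.
Qed.

Lemma sum_Posz n (f : 'I_n -> nat) :
  \sum_(j < n) (f j)%:Z = (\sum_(j < n) f j)%N%:Z.
Proof.
by rewrite -natz natr_sum; apply: eq_bigr => j _; rewrite natz.
Qed.

Theorem proposition3p13 (n : nat) (E : digraph n) (d : nat) :
  (0 < n)%N ->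
  strongly_connected E ->
  doubly_stochasticable E ->
  is_ds E d ->
  forall C : nat, (d <= C)%N ->
  exists A : 'M[int]_n, weight_assignment E A /\ C_regular E A (C%:Z).
Proof.
move=> hn hsc hds [[F [hF hcard]] _] C hC.
case: hF => hCG hall hcov hE.
have [H0 hH0] : exists H0, H0 \in F.
  have : Ordinal hn \in \bigcup_(H in F) H.1 by rewrite hcov inE.
  by case/bigcupP => H hH _; exists H.
have dpos : (0 < d)%N by rewrite -hcard; apply/card_gt0P; exists H0.
case: (ltnP 1 n) => hn2; last first.
  have n1 : n = 1%N by apply/eqP; rewrite eqn_leq hn2 hn.
  subst n.
  have e00 : (ord0, ord0) \in E.
    case: hds => A [hw [hr _]].
    have := hr ord0; rewrite big_ord1 => h.
    have [_ [h1 _]] := hw ord0 ord0.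
    by apply h1; rewrite h; exact: ltr01.
  exists (\matrix_(i, j) (C%:Z)); split.
    move=> i j; rewrite mxE ord1 [j]ord1; split; first exact: le0z_nat.
    split=> // _; rewrite ltz_nat; exact: leq_trans dpos hC.
  split=> //; split.
    by move=> i; rewrite big_ord1 mxE.
  by move=> j; rewrite big_ord1 mxE.
have hrow : forall H, H \in F -> forall i,
    (\sum_(j < n) (((i, j) \in H.2) : nat) = 1)%N /\
    (\sum_(k < n) (((k, i) \in H.2) : nat) = 1)%N.
  move=> H hH i.
  case: (hCG H hH) => [[v hv]|[ss [_ hcyc hU h1 h2]]].
    exfalso; have := hall H hH; rewrite hv /= => hvT.
    have := cards1 v; rewrite hvT cardsT card_ord => hn1.
    by rewrite hn1 in hn2.
  have hu : forall s, s \in ss -> uniq s by move=> s /hcyc[].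
  have hi : i \in flatten ss.
    have := hall H hH; rewrite h1 => /setP /(_ i); rewrite !inE => ->.
    done.
  by rewrite h2; split; [apply: row_cover | apply: col_cover].
pose a i j := (\sum_(H in F) (((i, j) \in H.2) : nat)
               + (C - d) * (((i, j) \in H0.2) : nat))%N.
exists (\matrix_(i, j) (a i j)%:Z); split.
  move=> i j; rewrite mxE; split; first exact: le0z_nat.
  rewrite ltz_nat -hE; split.
    rewrite /a addn_gt0 => /orP[].
      rewrite lt0n sum_nat_eq0 => /forallPn[H].
      rewrite negb_imply => /andP[hH hij]; apply/bigcupP; exists H => //.
      by move: hij; case: ((i, j) \in H.2).
    rewrite muln_gt0 => /andP[_ hij]; apply/bigcupP; exists H0 => //.
    by move: hij; case: ((i, j) \in H0.2).
  case/bigcupP => H hH hij.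
  apply: (leq_trans _ (leq_addr _ _)).
  by rewrite (bigD1 H) //= hij.
split=> //; split.
  move=> i.
  under eq_bigr do rewrite mxE.
  rewrite sum_Posz; congr Posz.
  rewrite /a big_split /= exchange_big /= -big_distrr /=.
  rewrite (proj1 (hrow H0 hH0 i)) muln1.
  rewrite (eq_bigr (fun _ => 1%N)); last by move=> H hH; rewrite (proj1 (hrow H hH i)).
  by rewrite sum1_card hcard subnKC.
move=> j.
under eq_bigr do rewrite mxE.
rewrite sum_Posz; congr Posz.
rewrite /a big_split /= exchange_big /= -big_distrr /=.
rewrite (proj2 (hrow H0 hH0 j)) muln1.
rewrite (eq_bigr (fun _ => 1%N)); last by move=> H hH; rewrite (proj2 (hrow H hH j)).
by rewrite sum1_card hcard subnKC.
Qed.
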